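(* Let $t$ be a normal $\lambda$-term and $v$ a closed $\lambda$-term, let $\alpha$ be a variable, $x_1,\dots,x_r$ variables, and for each $i$ let $y_{i1},\dots,y_{in_i}$ be variables distinct from $\alpha$. If $t[\lambda y_{11}\dots\lambda y_{1n_1}\alpha/x_1,\dots,\lambda y_{r1}\dots\lambda y_{rn_r}\alpha/x_r]\rightarrow_\beta v$ (simultaneous substitution), then $x_i\notin Fv(t)$ for all $1\le i\le r$.
   Context: $\lambda$-terms are those of the untyped $\lambda$-calculus; $Fv(t)$ is the set of free variables of $t$; a term is closed if it has no free variable; substitution is capture-avoiding; $\rightarrow_\beta$ denotes $\beta$-reduction in zero or more steps; a term is normal if it contains no $\beta$-redex. *)

(* Defs.v *)
From mathcomp Require Import all_boot.
From Stdlib Require Import Relations.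

Set Implicit Arguments.
Unset Strict Implicit.
Unset Printing Implicit Defensive.

Inductive term : Type :=
| var : nat -> term
| app : term -> term -> term
| lam : term -> term.

Definition up_ren (xi : nat -> nat) (n : nat) : nat :=
  match n with 0 => 0 | S k => S (xi k) end.

Fixpoint ren (xi : nat -> nat) (t : term) : term :=
  match t with
  | var n => var (xi n)
  | app t1 t2 => app (ren xi t1) (ren xi t2)
  | lam b => lam (ren (up_ren xi) b)
  end.

Definition up (sigma : nat -> term) (n : nat) : term :=
  match n with 0 => var 0 | S k => ren S (sigma k) end.

Fixpoint subst (sigma : nat -> term) (t : term) : term :=
  match t with
  | var n => sigma n
  | app t1 t2 => app (subst sigma t1) (subst sigma t2)
  | lam b => lam (subst (up sigma) b)
  end.

Definition beta_subst (b a : term) : term :=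
  subst (fun n => match n with 0 => a | S k => var k end) b.

Inductive step : term -> term -> Prop :=
| step_beta b a : step (app (lam b) a) (beta_subst b a)
| step_appL t t' u : step t t' -> step (app t u) (app t' u)
| step_appR t u u' : step u u' -> step (app t u) (app t u')
| step_lam t t' : step t t' -> step (lam t) (lam t').

Definition red : term -> term -> Prop := clos_refl_trans term step.

Fixpoint free (n : nat) (t : term) : Prop :=
  match t with
  | var m => m = n
  | app t1 t2 => free n t1 \/ free n t2
  | lam b => free n.+1 b
  end.

Definition closed_term (t : term) : Prop := forall n, ~ free n t.

Fixpoint normal (t : term) : Prop :=
  match t with
  | var _ => True
  | app (lam _) _ => False
  | app t1 t2 => normal t1 /\ normal t2
  | lam b => normal b
  end.

Fixpoint lams (k : nat) (b : term) : term :=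
  match k with 0 => b | S k' => lam (lams k' b) end.

(* the term  \y_1 ... \y_k . alpha  with alpha free (y_j distinct from alpha):
   under k binders the free variable alpha has index alpha + k *)
Definition lams_var (k alpha : nat) : term := lams k (var (alpha + k)).

(* the simultaneous substitution [lams_var n_i alpha / x_i]_{i}, where
   xs = [x_1;...;x_r], ns = [n_1;...;n_r] (first occurrence wins if some
   x_i coincide) *)
Definition sub_sigma (alpha : nat) (xs ns : seq nat) (z : nat) : term :=
  if z \in xs then lams_var (nth 0 ns (index z xs)) alpha else var z.

(* Main.v *)
Require Import Defs.
From mathcomp Require Import all_boot.
From mathcomp Require Import zify.
From Stdlib Require Import Relations.
From Stdlib Require List.
Set Implicit Arguments.
Unset Strict Implicit.

Fixpoint apps (h : term) (l : list term) : term :=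
  match l with nil => h | a :: l => app (apps h l) a end.

Inductive step_list : list term -> list term -> Prop :=
| sl_here a a' l : step a a' -> step_list (a :: l) (a' :: l)
| sl_there a l l' : step_list l l' -> step_list (a :: l) (a :: l').

Inductive Inv : nat -> term -> Prop :=
| I_lam k b : Inv k.+1 b -> Inv k (lam b)
| I_head k p h l : k + p <= h -> Inv k (apps (lams p (var h)) l)
| I_arg k j l a : List.In a l -> Inv k a -> Inv k (apps (var j) l).

Lemma apps_var_notlam j l b : apps (var j) l <> lam b.
Proof. by case: l. Qed.

Lemma step_apps_var j l s : step (apps (var j) l) s ->
  exists l', step_list l l' /\ s = apps (var j) l'.
Proof.
elim: l s => [|a l IH] s /= H; inversion H; subst; clear H.
- exfalso; match goal with E : lam _ = _ |- _ => exact: (apps_var_notlam (esym E)) end.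
- match goal with Hs : step _ _ |- _ => have [l' [H1 ->]] := IH _ Hs end.
  exists (a :: l'); split => //; exact: sl_there.
- match goal with Hs : step a ?a' |- _ => exists (a' :: l); split => //; exact: sl_here end.
Qed.

Lemma step_list_in a l l' : step_list l l' -> List.In a l ->
  List.In a l' \/ exists a', step a a' /\ List.In a' l'.
Proof.
elim => [b b' k Hs|b k k' _ IH] /= [E|Hi].
- subst; right; exists b'; by split; [|left].
- by left; right.
- by left; left.
- case: (IH Hi) => [H|[a' [H1 H2]]]; [left; right | right; exists a'; split; [|right]] => //.
Qed.

Lemma lams_nostep p h s : ~ step (lams p (var h)) s.
Proof.
elim: p s => [|p IH] s /= H; inversion H; subst. exact: (IH _ H1).
Qed.

Lemma subst_lams p sigma h m : sigma h = var m ->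
  subst sigma (lams p (var (h + p))) = lams p (var (m + p)).
Proof.
elim: p sigma h m => [|p IH] sigma h m E /=; first by rewrite !addn0.
congr lam. rewrite -!addSnnS. apply: IH. by rewrite /= E.
Qed.

Lemma ren_lams p xi h :
  ren xi (lams p (var (h + p))) = lams p (var (xi h + p)).
Proof.
elim: p xi h => [|p IH] xi h /=; first by rewrite !addn0.
congr lam. rewrite -!addSnnS. exact: (IH (up_ren xi) h.+1).
Qed.

Lemma apps_lams_lam p h l b : apps (lams p (var h)) l = lam b ->
  l = nil /\ exists p', p = p'.+1 /\ b = lams p' (var h).
Proof.
case: l => //= E. case: p E => //= p [<-]. split => //; by exists p.
Qed.

Lemma step_apps_lams p h l s : p <= h -> step (apps (lams p (var h)) l) s ->
  (exists l', step_list l l' /\ s = apps (lams p (var h)) l') \/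
  (exists p' l1 a, p = p'.+1 /\ l = l1 ++ a :: nil /\
      s = apps (lams p' (var h.-1)) l1).
Proof.
move=> Hp. elim: l s => [|a l IH] s /= H.
- by case: (lams_nostep H).
- inversion H; subst; clear H.
  + match goal with E : lam _ = _ |- _ => have [El [p' [Ep Eb]]] := apps_lams_lam (esym E) end. subst.
    right; exists p', nil, a; split => //; split => //.
    rewrite /beta_subst /=.
    have -> : lams p' (var h) = lams p' (var ((h.-1 - p').+1 + p')) by congr lams; congr var; lia.
    rewrite (@subst_lams p' _ (h.-1 - p').+1 (h.-1 - p')) //. congr lams; congr var; lia.
  + match goal with Hs : step _ _ |- _ => case: (IH _ Hs) end => [[l' [H1 ->]]|[p' [l1 [a0 [E1 [E2 E3]]]]]].
    * left; exists (a :: l'); split => //; exact: sl_there.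
    * right; exists p', (a :: l1), a0; subst; split => //.
  + match goal with Hs : step a ?a' |- _ => left; exists (a' :: l); split => //; exact: sl_here end.
Qed.

Lemma Inv_step k s s' : Inv k s -> step s s' -> Inv k s'.
Proof.
move=> HI; elim: HI s' => [k0 b _ IH|k0 p h l Hle|k0 j l a Hin Ha IH] s' Hs.
- inversion Hs; subst. apply: I_lam. exact: IH.
- have Hp : p <= h by lia.
  case: (step_apps_lams Hp Hs).
  + move=> [l' [_ ->]]; exact: I_head.
  + move=> [p' [l1 [a [Ep [_ ->]]]]]. apply: I_head. subst; lia.
- have [l' [Hl ->]] := step_apps_var Hs.
  case: (step_list_in Hl Hin) => [H|[a' [H1 H2]]].
  + exact: (@I_arg _ _ _ _ H Ha).
  + apply: (@I_arg _ _ _ _ H2). exact: IH.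
Qed.

Lemma Inv_red k s s' : red s s' -> Inv k s -> Inv k s'.
Proof.
elim => [x y H|x|x y z _ IH1 _ IH2] HI.
- exact: Inv_step HI H.
- exact: HI.
- exact: IH2 (IH1 HI).
Qed.

Lemma free_apps n h l : free n h -> free n (apps h l).
Proof. elim: l => [|a l IH] //= H; left; exact: IH. Qed.

Lemma free_apps_in n h l a : List.In a l -> free n a -> free n (apps h l).
Proof.
elim: l => [|b l IH] //= [E|Hi] H; [subst; right => // | left; exact: IH].
Qed.

Lemma free_lams n p b : free (n + p) b -> free n (lams p b).
Proof.
elim: p n => [|p IH] n /=; first by rewrite addn0.
move=> H; apply: IH; by rewrite addSnnS.
Qed.

Lemma Inv_free k t : Inv k t -> exists n, k <= n /\ free n t.
Proof.
elim => [k0 b _ [n [Hn Hf]]|k0 p h l Hle|k0 j l a Hin _ [n [Hn Hf]]].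
- exists n.-1; split; first lia. by rewrite /= prednK //; lia.
- exists (h - p); split; first lia. apply: free_apps; apply: free_lams.
  by rewrite /= subnK //; lia.
- exists n; split => //. exact: free_apps_in Hin Hf.
Qed.

Fixpoint tsize (t : term) : nat :=
  match t with
  | var _ => 1
  | app a b => (tsize a + tsize b).+1
  | lam b => (tsize b).+1
  end.

Lemma apps_size h l u : List.In u l -> tsize u < tsize (apps h l).
Proof.
elim: l => [|a l IH] //= [E|Hi]; [subst; lia | have := IH Hi; lia].
Qed.

Lemma normal_decomp t : normal t ->
  (exists b, t = lam b /\ normal b) \/
  exists j l, t = apps (var j) l /\ (forall u, List.In u l -> normal u).
Proof.
elim: t => [j|t1 IH1 t2 IH2|b IH] /= H.
- right; exists j, nil; split => //.
- case: t1 IH1 H => [j|u1 u2|b] IH1 H //.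
  + right; exists j, (t2 :: nil); split => // u [<-|[]] //; by case: H.
  + case: H => H1 H2. case: (IH1 H1) => [[b [E _]]|[j [l [E Hl]]]] //.
    right; exists j, (t2 :: l); rewrite /= -E; split => // u [<-|Hi] //; exact: Hl.
- left; by exists b.
Qed.

Lemma free_apps_var x j l : free x (apps (var j) l) ->
  x = j \/ exists u, List.In u l /\ free x u.
Proof.
elim: l => [|a l IH] /= H; first by left.
case: H => [H|H].
- case: (IH H) => [->|[u [H1 H2]]]; [by left|right; exists u; split => //; by right].
- right; exists a; split => //; by left.
Qed.

Lemma subst_apps sigma h l :
  subst sigma (apps h l) = apps (subst sigma h) (List.map (subst sigma) l).
Proof. elim: l => //= a l ->. by []. Qed.

Definition good d s := exists p h, d + p <= h /\ s = lams p (var h).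

Definition G (sigma : nat -> term) d :=
  (forall y, y < d -> sigma y = var y) /\ (forall y, d <= y -> good d (sigma y)).

Lemma G_up sigma d : G sigma d -> G (up sigma) d.+1.
Proof.
move=> [H1 H2]; split.
- case => [|y] // Hy /=. by rewrite H1.
- case => [|y] // Hy /=. have [p [h [Hle E]]] := H2 y Hy.
  rewrite E. exists p, h.+1; split; first lia.
  have -> : h = (h - p) + p by lia.
  rewrite ren_lams. congr lams; congr var; lia.
Qed.

Lemma main n : forall t, tsize t < n -> normal t -> forall sigma d, G sigma d ->
  forall x, d <= x -> free x t -> Inv d (subst sigma t).
Proof.
elim: n => [|n IH] t // Hs Hn sigma d HG x Hx Hf.
case: (normal_decomp Hn) => [[b [E Hb]]|[j [l [E Hl]]]]; subst.
- apply: I_lam. have Hsb : tsize b < n by move: Hs => /=; lia.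
  have Hx' : d.+1 <= x.+1 by [].
  exact: (IH b Hsb Hb _ _ (G_up HG) x.+1 Hx' Hf).
- rewrite subst_apps /=. case: HG => [G1 G2].
  case: (leqP d j) => Hj.
  + have [p [h [Hle ->]]] := G2 j Hj. exact: I_head.
  + rewrite G1 //. case: (free_apps_var Hf) => [E|[u [Hu Hfu]]]; first lia.
    apply: (@I_arg _ _ _ (subst sigma u)); first exact: List.in_map.
    apply: (IH u _ (Hl u Hu) _ _ (conj G1 G2) x) => //.
    have := apps_size (var j) Hu. lia.
Qed.

Unset Implicit Arguments.
Theorem lemma2p1p4 (t v : term) (alpha : nat) (xs ns : seq nat) :
  size ns = size xs ->
  normal t -> closed_term v ->
  red (subst (sub_sigma alpha xs ns) t) v ->
  forall i, i < size xs -> ~ free (nth 0 xs i) t.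
Proof.
move=> _ Hn Hc Hr i _ Hf.
have HG : G (sub_sigma alpha xs ns) 0.
  split => // y _. rewrite /sub_sigma. case: (y \in xs).
  - exists (nth 0 ns (index y xs)), (alpha + nth 0 ns (index y xs)); split => //. lia.
  - exists 0, y; split => //.
have HI := main (ltnSn (tsize t)) Hn HG (leq0n _) Hf.
have [m [_ Hm]] := Inv_free (Inv_red Hr HI).
exact: Hc m Hm.
Qed.
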